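(* Let $G$ be a group and $f:G\to\mathbb N$ a subadditive function ($f(xy)\le f(x)+f(y)$) with $f(x)=0$ iff $x=\mathrm{id}$. Let $T=\{t\in G: f(t)=1\}$. Then the poset $(G,\le_f)$ is $f$-graded, meaning that whenever $y$ covers $x$ in $(G,\le_f)$ we have $f(y)=f(x)+1$, if and only if $T$ generates $G$ and $f=\ell_T$, where $\ell_T(x)$ is the minimum $k$ such that $x$ is a product of $k$ elements of $T$.
   Context: $x\le_f y$ means $f(x)+f(x^{-1}y)=f(y)$; this is a partial order on $G$. *)

(* Defs.v *)
From Stdlib Require Import List Arith.
Import ListNotations.

Record Group := {
  carrier :> Type;
  gmul : carrier -> carrier -> carrier;
  gone : carrier;
  ginv : carrier -> carrier;
  gmulA : forall x y z, gmul x (gmul y z) = gmul (gmul x y) z;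
  gmul1 : forall x, gmul gone x = x;
  gmulV : forall x, gmul (ginv x) x = gone
}.

Section Defs.
Variable G : Group.

Definition gprod (s : list G) : G := fold_right (gmul G) (gone G) s.

Definition subadditive (f : G -> nat) : Prop :=
  forall x y, f (gmul G x y) <= f x + f y.

Definition le_f (f : G -> nat) (x y : G) : Prop :=
  f x + f (gmul G (ginv G x) y) = f y.

Definition lt_f (f : G -> nat) (x y : G) : Prop := le_f f x y /\ x <> y.

Definition covers_f (f : G -> nat) (x y : G) : Prop :=
  lt_f f x y /\ ~ (exists z, lt_f f x z /\ lt_f f z y).

Definition f_graded (f : G -> nat) : Prop :=
  forall x y, covers_f f x y -> f y = f x + 1.

Definition generates (T : G -> Prop) : Prop :=
  forall x, exists s : list G,
    (forall a, In a s -> T a \/ T (ginv G a)) /\ x = gprod s.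

Definition prod_of_T (T : G -> Prop) (x : G) (k : nat) : Prop :=
  exists s : list G, length s = k /\ (forall a, In a s -> T a) /\ x = gprod s.

Definition is_ellT (T : G -> Prop) (x : G) (k : nat) : Prop :=
  prod_of_T T x k /\ forall k', prod_of_T T x k' -> k <= k'.

End Defs.

(* Main.v *)
Require Import Defs.
From Stdlib Require Import List Arith Lia Classical.

Section Aux.
Variable G : Group.
Notation "x * y" := (gmul G x y).

Lemma solveL (a u v : G) : a * u = v -> u = ginv G a * v.
Proof. intros <-. rewrite gmulA, gmulV, gmul1. reflexivity. Qed.

Lemma mulVr (x : G) : x * ginv G x = gone G.
Proof.
  rewrite <- (gmul1 G (x * ginv G x)).
  rewrite <- (gmulV G (ginv G x)) at 1.
  rewrite <- gmulA, (gmulA G (ginv G x)), gmulV, gmul1. apply gmulV.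
Qed.

Lemma mulKV (x y : G) : x * (gmul G (ginv G x) y) = y.
Proof. rewrite gmulA, mulVr, gmul1. reflexivity. Qed.

Lemma inv1mul (x : G) : ginv G (gone G) * x = x.
Proof. symmetry. apply solveL. apply gmul1. Qed.

Variable f : G -> nat.
Hypothesis hsub : subadditive G f.
Hypothesis hzero : forall x : G, f x = 0 <-> x = gone G.

Lemma prod_bound (s : list G) : (forall a, In a s -> f a = 1) -> f (gprod G s) <= length s.
Proof.
  induction s as [|a s IH]; intros H; simpl.
  - assert (f (gone G) = 0) by (apply hzero; reflexivity). lia.
  - pose proof (hsub a (gprod G s)). rewrite (H a (or_introl eq_refl)) in H0.
    assert (f (gprod G s) <= length s) by (apply IH; intros; apply H; right; auto). 
    unfold gprod in *. simpl. lia.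
Qed.

Lemma lt_f_lt (a b : G) : lt_f G f a b -> f a < f b.
Proof.
  intros [H Hne]. unfold le_f in H.
  destruct (f (ginv G a * b)) eqn:E.
  - apply hzero in E. exfalso. apply Hne. rewrite <- (mulKV a b), E.
    rewrite <- (gmulV G a). rewrite gmulA, mulVr, gmul1. reflexivity.
  - lia.
Qed.

Lemma le_trans_f (a b c : G) : le_f G f a b -> le_f G f b c -> le_f G f a c.
Proof.
  unfold le_f; intros H1 H2.
  assert (E : ginv G a * c = (ginv G a * b) * (ginv G b * c)).
  { symmetry. apply solveL. rewrite gmulA, mulKV. apply mulKV. }
  pose proof (hsub (ginv G a * b) (ginv G b * c)). rewrite <- E in H.
  pose proof (hsub a (ginv G a * c)). rewrite mulKV in H0. lia.
Qed.
End Aux.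

Theorem mainTheorem4 (G : Group) (f : G -> nat)
  (hsub : subadditive G f)
  (hzero : forall x : G, f x = 0 <-> x = gone G) :
  f_graded G f <->
  (generates G (fun t => f t = 1) /\
   forall x : G, is_ellT G (fun t => f t = 1) x (f x)).
Proof.
  assert (f1 : f (gone G) = 0) by (apply hzero; reflexivity).
  split.
  - intros Hgr.
    assert (Hrep : forall n x, f x = n -> prod_of_T G (fun t => f t = 1) x n).
    { intro n. induction n as [n IH] using lt_wf_ind. intros x Hx.
      destruct n as [|n].
      - apply hzero in Hx. subst. exists nil. simpl. repeat split; auto. contradiction.
      -
        assert (Hc : forall m z, f z <= m -> lt_f G f (gone G) z -> le_f G f z x ->
                   exists c, covers_f G f (gone G) c /\ le_f G f c x).
        { intro m. induction m as [|m IHm]; intros z Hz Hlt Hle.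
          - pose proof (lt_f_lt G f hzero _ _ Hlt). lia.
          - destruct (classic (exists w, lt_f G f (gone G) w /\ lt_f G f w z)) as [[w [Hw1 Hw2]]|Hn].
            + apply (IHm w).
              * pose proof (lt_f_lt G f hzero _ _ Hw2). lia.
              * exact Hw1.
              * exact (le_trans_f G f hsub _ _ _ (proj1 Hw2) Hle).
            + exists z. split; [split; auto | exact Hle]. }
        assert (Hx1 : lt_f G f (gone G) x).
        { split. unfold le_f. rewrite inv1mul, f1. reflexivity.
          intro E. subst. lia. }
        assert (Hxx : le_f G f x x) by (unfold le_f; rewrite gmulV, f1; lia).
        destruct (Hc (f x) x (le_n _) Hx1 Hxx) as [c [Hcov Hcx]].
        assert (fc : f c = 1) by (rewrite (Hgr _ _ Hcov), f1; reflexivity).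
        unfold le_f in Hcx.
        destruct (IH n ltac:(lia) (gmul G (ginv G c) x) ltac:(lia)) as [s [Hl [Hs Hp]]].
        exists (c :: s). simpl. split; [lia|]. split.
        + intros a [<-|Ha]; auto.
        + unfold gprod in *. simpl. rewrite <- Hp. symmetry. apply mulKV. }
    assert (Hmin : forall x k, prod_of_T G (fun t => f t = 1) x k -> f x <= k).
    { intros x k [s [Hl [Hs Hp]]]. subst. apply prod_bound; auto. }
    split.
    + intros x. destruct (Hrep (f x) x eq_refl) as [s [_ [Hs Hp]]].
      exists s. split; auto.
    + intros x. split; auto.
  - intros [_ Hell] x y [[Hle Hne] Hnc].
    unfold le_f in Hle.
    destruct (proj1 (Hell (gmul G (ginv G x) y))) as [s [Hl [Hs Hp]]].
    destruct s as [|t s].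
    + simpl in Hl. exfalso. apply Hne. unfold gprod in Hp. simpl in Hp.
      rewrite <- (mulKV G x y), Hp. idtac.
      rewrite <- (gmulV G x), gmulA, mulVr, gmul1. reflexivity.
    + destruct s as [|t2 s'].
      * simpl in Hl. lia.
      * exfalso. apply Hnc.
        set (r := t2 :: s') in *.
        assert (ft : f t = 1) by (apply Hs; left; auto).
        assert (Hr : gmul G (ginv G (gmul G x t)) y = gprod G r).
        { symmetry. apply solveL. rewrite <- gmulA.
          unfold gprod in Hp |- *. simpl in Hp. subst r. simpl. rewrite <- Hp. apply mulKV. }
        assert (Hrb : f (gprod G r) <= length r) by (apply prod_bound; auto; intros; apply Hs; right; auto).
        assert (Hz : f (gmul G x t) <= f x + 1) by (rewrite <- ft; apply hsub).
        assert (Hy : f y <= f (gmul G x t) + f (gprod G r)).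
        { rewrite <- Hr. pose proof (hsub (gmul G x t) (gmul G (ginv G (gmul G x t)) y)).
          rewrite mulKV in H. exact H. }
        simpl in Hl. subst r. simpl in Hrb, Hy, Hr.
        exists (gmul G x t). split; split.
        -- unfold le_f. rewrite <- (solveL G x t (gmul G x t) eq_refl). lia.
        -- intro E. rewrite <- E in Hz, Hy. lia.
        -- unfold le_f. rewrite Hr. simpl. lia.
        -- intro E. rewrite <- E in Hr. rewrite gmulV in Hr. rewrite <- Hr, f1 in Hy. lia.
Qed.
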